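(* Let $\underline{L}$ be a finite lattice. Then there exists a unique DI-core of $\underline{L}$; that is, the family $DI(\underline{L})$ has exactly one smallest element with respect to set inclusion.
   Context: For $u\le v$ in a lattice $L$, $[u,v]=\{x\mid u\le x\le v\}$, $(v]=\{x\mid x\le v\}$, $[u)=\{x\mid u\le x\}$. An interval $[u,v]$ of $L$ is dismantling for $L$ if $u\neq\bot$, $v\neq\top$, $u$ is supremum-prime in $(v]$ (for all $x,y\in(v]$, $u\le x\vee y$ implies $u\le x$ or $u\le y$) and $v$ is infimum-prime in $[u)$ (for all $x,y\in[u)$, $x\wedge y\le v$ implies $x\le v$ or $y\le v$). Removing a dismantling interval from a lattice leaves a lattice (with the restricted order). $DI(\underline{L})$ is the family of all subsets of $L$ obtainable by iterated dismantling starting from $\underline{L}$: $X\in DI(\underline{L})$ iff there is a sequence $L=X_0\supseteq X_1\supseteq\cdots\supseteq X_k=X$ ($k\ge0$) such that for each $i$, $X_{i+1}=X_i\setminus S_i$ for some interval $S_i$ of the lattice $X_i$ that is dismantling for $X_i$. A smallest element of $DI(\underline{L})$ (with respect to inclusion) is called a DI-core of $\underline{L}$. *)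

(* Defs.v *)
From mathcomp Require Import all_boot all_order.
Set Implicit Arguments. Unset Strict Implicit. Unset Printing Implicit Defensive.
Import Order.Theory.
Local Open Scope order_scope.

Section DI.
Context {d : Order.disp_t} {T : finTBLatticeType d}.

(* The order on a subset X of T is the restriction of the order of T. *)

Definition intv (X : {set T}) (u v : T) : {set T} :=
  [set x in X | (u <= x) && (x <= v)].

Definition is_join_in (X : {set T}) (x y z : T) : Prop :=
  [/\ z \in X, x <= z, y <= z &
      forall w, w \in X -> x <= w -> y <= w -> z <= w].

Definition is_meet_in (X : {set T}) (x y z : T) : Prop :=
  [/\ z \in X, z <= x, z <= y &
      forall w, w \in X -> w <= x -> w <= y -> w <= z].

Definition is_bot_in (X : {set T}) (u : T) : Prop := forall x, x \in X -> u <= x.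
Definition is_top_in (X : {set T}) (v : T) : Prop := forall x, x \in X -> x <= v.

Definition sup_prime_below (X : {set T}) (u v : T) : Prop :=
  forall x y z, x \in X -> y \in X -> x <= v -> y <= v ->
    is_join_in X x y z -> u <= z -> u <= x \/ u <= y.

Definition inf_prime_above (X : {set T}) (u v : T) : Prop :=
  forall x y z, x \in X -> y \in X -> u <= x -> u <= y ->
    is_meet_in X x y z -> z <= v -> x <= v \/ y <= v.

Definition dismantling (X : {set T}) (u v : T) : Prop :=
  [/\ u \in X, v \in X, u <= v,
      ~ is_bot_in X u /\ ~ is_top_in X v &
      sup_prime_below X u v /\ inf_prime_above X u v].

Inductive DI : {set T} -> Prop :=
| DI_base : DI [set: T]
| DI_step (X : {set T}) (u v : T) :
    DI X -> dismantling X u v -> DI (X :\: intv X u v).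

Definition DI_core (C : {set T}) : Prop :=
  DI C /\ forall X, DI X -> C \subset X.

End DI.

(* Main.v *)
Require Import Defs.
From mathcomp Require Import all_boot all_order.
From Stdlib Require Import Classical.
Set Implicit Arguments. Unset Strict Implicit. Unset Printing Implicit Defensive.
Import Order.Theory.

Section Proofs.
Local Open Scope order_scope.
Context {d : Order.disp_t} {T : finTBLatticeType d}.

Definition good (X : {set T}) : Prop :=
  [/\ \top \in X, \bot \in X,
      (forall x y, x \in X -> y \in X -> x `|` y \in X) &
      (forall x y, x \in X -> y \in X -> x `&` y \in X)].

Lemma join_in (X : {set T}) x y : x `|` y \in X -> is_join_in X x y (x `|` y).
Proof. move=> h; split => //; [exact: leUl | exact: leUr | by move=> w _ a b; rewrite leUx a b]. Qed.

Lemma meet_in (X : {set T}) x y : x `&` y \in X -> is_meet_in X x y (x `&` y).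
Proof. move=> h; split => //; [exact: leIl | exact: leIr | by move=> w _ a b; rewrite lexI a b]. Qed.

Lemma DI_good (X : {set T}) : DI X -> good X.
Proof.
elim=> [|{}X u v _ [gT gB gJ gM] [uX vX uv [nb nt] [sp ip]]].
  by split => //= *; rewrite inE.
split.
- rewrite /intv !inE gT /= andbT; apply/negP => /andP[_ h].
  by apply: nt => x _; exact: le_trans (lex1 x) h.
- rewrite /intv !inE gB /= andbT; apply/negP => /andP[h _].
  by apply: nb => x _; exact: le_trans h (le0x x).
- move=> x y; rewrite /intv !inE => /andP[hx xX] /andP[hy yX].
  rewrite gJ // andbT; apply/negP => /andP[_ /andP[uj jv]].
  move: jv; rewrite leUx => /andP[xv yv].
  case: (sp x y (x `|` y) xX yX xv yv (join_in (gJ _ _ xX yX)) uj) => h.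
  + by move: hx; rewrite xX h xv.
  + by move: hy; rewrite yX h yv.
- move=> x y; rewrite /intv !inE => /andP[hx xX] /andP[hy yX].
  rewrite gM // andbT; apply/negP => /andP[_ /andP[uj jv]].
  move: uj; rewrite lexI => /andP[ux uy].
  case: (ip x y (x `&` y) xX yX ux uy (meet_in (gM _ _ xX yX)) jv) => h.
  + by move: hx; rewrite xX h ux.
  + by move: hy; rewrite yX h uy.
Qed.

Lemma shrink (X C : {set T}) u v c : good C -> C \subset X -> dismantling X u v ->
  c \in C -> u <= c -> c <= v ->
  exists u' v', dismantling C u' v' /\ c \in intv C u' v'.
Proof.
move=> [gT gB gJ gM] /subsetP CX [uX vX uv [nb nt] [sp ip]] cC uc cv.
pose S := [pred x | (x \in C) && (u <= x) && (x <= v)].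
pose u' := \meet_(x | S x) x.
pose v' := \join_(x | S x) x.
have cS : S c by rewrite /S /= cC uc cv.
have u'C : u' \in C by apply: (big_ind (fun w => w \in C)) => // i /andP[/andP[]]. 
have v'C : v' \in C by apply: (big_ind (fun w => w \in C)) => // i /andP[/andP[]].
have uu' : u <= u'.
  apply: (big_ind (fun w => u <= w)) => [|a b ha hb|i /andP[/andP[]] //].
    exact: lex1.
  by rewrite lexI ha hb.
have v'v : v' <= v.
  apply: (big_ind (fun w => w <= v)) => [|a b ha hb|i /andP[] //].
    exact: le0x.
  by rewrite leUx ha hb.
have u'c : u' <= c by exact: meets_inf.
have cv' : c <= v' by exact: joins_sup.
exists u', v'; split; last by rewrite /intv inE cC u'c cv'.
split => //; first exact: le_trans cv'.
  split.
    move=> h; apply: nb => x _; apply: le_trans (le0x x).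
    by apply: le_trans uu' (h _ gB).
  move=> h; apply: nt => x _; apply: le_trans (lex1 x) _.
  by apply: le_trans (h _ gT) v'v.
split.
  move=> x y z xC yC xv yv [zC xz yz zl] uz.
  have zj : z <= x `|` y by apply: zl; [exact: gJ | exact: leUl | exact: leUr].
  have uj : u <= x `|` y by apply: le_trans uu' (le_trans uz zj).
  case: (sp x y (x `|` y) (CX _ xC) (CX _ yC) (le_trans xv v'v) (le_trans yv v'v)
          (join_in (CX _ (gJ _ _ xC yC))) uj) => h.
    by left; apply: meets_inf; rewrite /S /= xC h (le_trans xv v'v).
  by right; apply: meets_inf; rewrite /S /= yC h (le_trans yv v'v).
move=> x y z xC yC xv yv [zC xz yz zl] uz.
have zj : x `&` y <= z by apply: zl; [exact: gM | exact: leIl | exact: leIr].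
have uj : x `&` y <= v by apply: le_trans (le_trans zj uz) v'v.
case: (ip x y (x `&` y) (CX _ xC) (CX _ yC) (le_trans uu' xv) (le_trans uu' yv)
        (meet_in (CX _ (gM _ _ xC yC))) uj) => h.
  by left; apply: joins_sup; rewrite /S /= xC h (le_trans uu' xv).
by right; apply: joins_sup; rewrite /S /= yC h (le_trans uu' yv).
Qed.

Lemma exists_min : exists C : {set T}, DI C /\ forall Y : {set T}, DI Y -> (#|C| <= #|Y|)%N.
Proof.
suff H : forall n, (exists X : {set T}, DI X /\ (#|X| <= n)%N) ->
   exists C : {set T}, DI C /\ forall Y : {set T}, DI Y -> (#|C| <= #|Y|)%N.
  by apply: (H #|[set: T]|); exists [set: T]; split => //; exact: DI_base.
elim=> [|n IH] [X [DX hX]].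
  by exists X; split => // Y _; apply: leq_trans hX _.
case: (classic (exists Y : {set T}, DI Y /\ (#|Y| <= n)%N)) => [h|h]; first exact: IH.
exists X; split => // Y DY; apply: leq_trans hX _.
rewrite ltnNge; apply/negP => hY; apply: h; exists Y; split => //.
Qed.

Lemma core_exists : exists C : {set T}, DI_core C.
Proof.
have [C [DC minC]] := exists_min.
exists C; split => // X; elim => [|{}X u v DX IH dis]; first exact: subsetT.
apply/subsetP => c cC; rewrite inE (subsetP IH _ cC) andbT.
apply/negP; rewrite /intv inE => /andP[_ /andP[uc cv]].
have [u' [v' [dis' cI]]] := shrink (DI_good DC) IH dis cC uc cv.
have := minC _ (DI_step DC dis').
rewrite cardsD leqNgt => /negP; apply.
have hpos : (0 < #|C :&: intv C u' v'|)%N.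
  by rewrite card_gt0; apply/set0Pn; exists c; rewrite inE cC cI.
have : (#|C :&: intv C u' v'| <= #|C|)%N by rewrite subset_leq_card // subsetIl.
by move=> hb; rewrite ltn_subrL hpos (leq_trans hpos hb).
Qed.

End Proofs.

Theorem theorem2 (d : Order.disp_t) (L : finTBLatticeType d) :
  exists! C : {set L}, DI_core C.
Proof.
have [C hC] := core_exists (T := L).
exists C; split => // C' [DC' mC'].
by apply/eqP; rewrite eqEsubset (proj2 hC _ DC') (mC' _ (proj1 hC)).
Qed.
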